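(* Let $G$ be a simple graph with canonical mixed graph $F$ and let $Y$ be as defined in the context. Let $u,w\in V(G)$ and $v\in Y$ be such that $\overrightarrow{uv}$ and $\overrightarrow{vw}$ are arcs of $F$ and $uw\notin E(G)$. Then $cM_2(G-uv-vw+uw)>cM_2(G)$.
   Context: All graphs are finite and simple; $d_G(u)$ is the degree of $u$ and $cM_2(G)=\sum_{uv\in E(G)}|d_G(u)^2-d_G(v)^2|$. $G-uv-vw+uw$ denotes $G$ with edges $uv,vw$ deleted and edge $uw$ added. The canonical mixed graph $F$ of $G$ has vertex set $V(G)$; for each edge $uv\in E(G)$: if $d_G(u)>d_G(v)$ then $F$ contains the arc $\overrightarrow{uv}$, and if $d_G(u)=d_G(v)$ then $F$ contains the undirected edge $uv$. $d^+_F(u)$ (resp. $d^-_F(u)$) is the number of arcs of $F$ with tail (resp. head) $u$. $Y=\{u\in V(G): d^+_F(u)< d^-_F(u)\}$. *)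

(* Defs.v *)
From mathcomp Require Import all_boot all_order.
Set Implicit Arguments. Unset Strict Implicit. Unset Printing Implicit Defensive.

Definition simple_graph (T : finType) (e : rel T) : Prop :=
  symmetric e /\ irreflexive e.

Definition deg (T : finType) (e : rel T) (x : T) : nat := #|[set y | e x y]|.

Definition sqdiff (T : finType) (e : rel T) (x y : T) : nat :=
  maxn (deg e x ^ 2) (deg e y ^ 2) - minn (deg e x ^ 2) (deg e y ^ 2).

(* cM_2(G) = sum over edges uv of |d(u)^2 - d(v)^2|; each unordered edge is
   counted twice in the sum over ordered adjacent pairs, hence the halving
   (the ordered sum is always even by symmetry of sqdiff). *)
Definition cM2 (T : finType) (e : rel T) : nat :=
  (\sum_(x : T) \sum_(y : T | e x y) sqdiff e x y) %/ 2.

Definition arcF (T : finType) (e : rel T) (x y : T) : bool :=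
  e x y && (deg e y < deg e x).

Definition outdegF (T : finType) (e : rel T) (x : T) : nat := #|[set y | arcF e x y]|.
Definition indegF (T : finType) (e : rel T) (x : T) : nat := #|[set y | arcF e y x]|.

Definition Yset (T : finType) (e : rel T) : {set T} :=
  [set x | outdegF e x < indegF e x].

Definition same_pair (T : finType) (x y a b : T) : bool :=
  ((x == a) && (y == b)) || ((x == b) && (y == a)).

Definition transform (T : finType) (e : rel T) (u v w : T) : rel T :=
  fun x y => (e x y && ~~ same_pair x y u v && ~~ same_pair x y v w)
             || same_pair x y u w.

(* Main.v *)
Require Import Defs.
From mathcomp Require Import all_boot all_order zify.
Set Implicit Arguments.

Lemma split2 (T : finType) (f : T -> nat) p q : p != q ->
  \sum_y f y = f p + (f q + \sum_(y | (y != p) && (y != q)) f y).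
Proof. by move=> pq; rewrite (bigD1 p) //= (bigD1 q) //= eq_sym. Qed.

Lemma deg_sum (T : finType) (r : rel T) x : deg r x = \sum_y (r x y : nat).
Proof. by rewrite /deg -sum1_card big_mkcond /=; apply: eq_bigr => y _; rewrite inE. Qed.

Lemma sp0 (T : finType) (x y a b : T) : x != a -> x != b -> same_pair x y a b = false.
Proof. by rewrite /same_pair => /negbTE -> /negbTE ->. Qed.

Definition sd (p q : nat) := maxn (p^2) (q^2) - minn (p^2) (q^2).
Lemma sd_le {p q} : p <= q -> sd p q = q^2 - p^2.
Proof. move=> h; have h2 : p^2 <= q^2 by rewrite leq_sqr.
by rewrite /sd (maxn_idPr h2) (minn_idPl h2). Qed.
Lemma sdC p q : sd p q = sd q p.
Proof. by rewrite /sd maxnC minnC. Qed.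
Lemma sd_tri a p q : q < a -> a < p -> sd a p + sd a q = sd p q.
Proof. move=> h1 h2. rewrite (sd_le (ltnW h2)) (sdC a q) (sd_le (ltnW h1)) sdC (sd_le (ltnW (leq_trans h1 (ltnW h2)))).
have := (leq_sqr q a); have := leq_sqr a p. rewrite (ltnW h1) (ltnW h2) => A B. lia. Qed.
Lemma core c d : sd (c.+2) d + (4*c+4) * (c.+2 <= d) <= sd c d + (4*c+4) * (d < c.+2).
Proof.
case: (leqP c.+2 d) => h /=.
  rewrite (sd_le h) (sd_le (leq_trans (leqnSn _) (ltnW h))).
  have := leq_sqr c.+2 d; rewrite h => A. nia.
case: (leqP d c) => h2.
  rewrite sdC (sd_le (ltnW h)) sdC (sd_le h2). have := leq_sqr d c; rewrite h2 => A. nia.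
have -> : d = c.+1 by lia.
rewrite sdC (sd_le (leqnSn _)) (sd_le (leqnSn _)). nia.
Qed.

Definition h {T : finType} (r : rel T) (g : T -> T -> nat) x y := if r x y then g x y else 0.
Lemma decomp (T : finType) (r : rel T) (g : T -> T -> nat) v :
  symmetric r -> irreflexive r -> (forall x y, g x y = g y x) ->
  \sum_x \sum_(y | r x y) g x y =
  2 * \sum_y h r g v y + \sum_(x | x != v) \sum_(y | y != v) h r g x y.
Proof.
move=> sr ir gs.
rewrite (bigD1 v) //= -big_mkcond /=.
have E : forall x, x != v -> \sum_(y | r x y) g x y = h r g x v + \sum_(y | y != v) h r g x y.
  by move=> x _; rewrite big_mkcond (bigD1 v) //=.
rewrite (eq_bigr _ E) big_split /=.
have -> : \sum_(x | x != v) h r g x v = \sum_y h r g v y.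
  rewrite [RHS](bigD1 v) //= /h ir add0n; apply: eq_bigr => x _; by rewrite sr gs.
rewrite /h -big_mkcond /=; lia.
Qed.

Lemma card_sumb (T : finType) (p : pred T) : #|[set y | p y]| = \sum_y (p y : nat).
Proof. by rewrite -sum1_card big_mkcond /=; apply: eq_bigr => y _; rewrite inE. Qed.

Lemma sqE (T : finType) (r : rel T) x y : sqdiff r x y = sd (deg r x) (deg r y).
Proof. by []. Qed.

Section S.
Variables (T : finType) (e : rel T) (u v w : T).
Hypotheses (se : symmetric e) (ie : irreflexive e) (uv : u != v) (vw : v != w) (uw : u != w)
  (euv : e u v) (evw : e v w) (nuw : ~~ e u w).
Let E := transform e u v w.

Lemma E_gen x y : x != u -> x != v -> x != w -> E x y = e x y.
Proof. by move=> a b c; rewrite /E /transform !sp0 // ?andbT ?orbF // eq_sym. Qed.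

Lemma Ev y : y != u -> y != w -> E v y = e v y.
Proof. move=> a b; rewrite /E /transform /same_pair (negbTE a) (negbTE b) eqxx.
by rewrite (eq_sym v u) (negbTE uv) (negbTE vw) /=; case: (e v y).
Qed.

Lemma Eoff x y : x != v -> y != v -> E x y = e x y || same_pair x y u w.
Proof. move=> a b; rewrite /E /transform /same_pair (negbTE a) (negbTE b) /=.
by case: (x == u); case: (x == w); case: (e x y).
Qed.


Lemma nq : ((u == v) = false) * ((v == u) = false) * ((v == w) = false) * ((w == v) = false)
  * ((u == w) = false) * ((w == u) = false).
Proof. by rewrite !(eq_sym v) !(eq_sym w) (negbTE uv) (negbTE vw) (negbTE uw). Qed.

Lemma Evals : (E u v = false) * (E u w = true) * (E w u = true) * (E w v = false)
  * (E v u = false) * (E v w = false).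
Proof. rewrite /E /transform /same_pair !eqxx !nq /=. by do !split; rewrite ?andbF ?orbT. Qed.

Lemma spC (x y a b : T) : same_pair x y a b = same_pair y x a b.
Proof. by rewrite /same_pair orbC (andbC (x == a)) (andbC (x == b)). Qed.

Lemma sE : symmetric E.
Proof. by move=> x y; rewrite /E /transform (se x y) !(spC x y). Qed.

Lemma iE : irreflexive E.
Proof. move=> x; rewrite /E /transform ie /= /same_pair.
case: (eqVneq x u) => [->|xu]; [by rewrite ?eqxx nq | by rewrite andbF]. Qed.

Lemma degE x : x != v -> deg E x = deg e x.
Proof.
move=> xv; rewrite !deg_sum.
case: (eqVneq x u) => [->|xu].
  rewrite [LHS](@split2 _ _ v w vw) [RHS](@split2 _ _ v w vw) !Evals euv (negbTE nuw); rewrite /= add0n add1n; congr _.+1.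
  apply: eq_bigr => y /andP[yv yw]; rewrite Eoff // /same_pair (negbTE yw) nq andbF.
  by case: (e u y).
case: (eqVneq x w) => [->|xw].
  rewrite [LHS](@split2 _ _ u v uv) [RHS](@split2 _ _ u v uv) !Evals (se w v) evw (se w u) (negbTE nuw).
  rewrite /= add0n add1n; congr _.+1.
  have wv : w != v by rewrite eq_sym.
  apply: eq_bigr => y /andP[yu yv]; rewrite (Eoff _ _ wv yv) /same_pair (negbTE yu) nq andbF.
  by case: (e w y).
by apply: eq_bigr => y _; rewrite E_gen.
Qed.

Lemma degEv : deg E v + 2 = deg e v.
Proof.
rewrite !deg_sum [X in X + 2](@split2 _ _ u w uw) [RHS](@split2 _ _ u w uw) !Evals (se v u) euv evw.
suff -> : \sum_(y | (y != u) && (y != w)) (E v y : nat) = \sum_(y | (y != u) && (y != w)) (e v y : nat) by lia.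
by apply: eq_bigr => y /andP[yu yw]; rewrite Ev.
Qed.


Hypotheses (du : deg e v < deg e u) (dw : deg e w < deg e v).

Let D := sqdiff e u w.

Lemma Wcomp : \sum_(x | x != v) \sum_(y | y != v) h E (sqdiff E) x y =
  \sum_(x | x != v) \sum_(y | y != v) h e (sqdiff e) x y + 2 * D.
Proof.
have pt x y : x != v -> y != v ->
  h E (sqdiff E) x y = h e (sqdiff e) x y + (if same_pair x y u w then D else 0).
  move=> xv yv; rewrite /h Eoff // !sqE !degE //.
  case sp: (same_pair x y u w); last by rewrite orbF addn0.
  move: sp; rewrite /same_pair => /orP[/andP[/eqP-> /eqP->]|/andP[/eqP-> /eqP->]].
    by rewrite (negbTE nuw) /D sqE.
  by rewrite se (negbTE nuw) /D sqE sdC.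
rewrite (eq_bigr (fun x => \sum_(y | y != v) h e (sqdiff e) x y +
     \sum_(y | y != v) (if same_pair x y u w then D else 0))); last first.
  by move=> x xv; rewrite -big_split /=; apply: eq_bigr => y yv; rewrite pt.
rewrite big_split /=; congr (_ + _).
have wv : w != v by rewrite eq_sym.
rewrite (bigD1 u) //= [X in _ + X](bigD1 w) /=; last by rewrite wv /= eq_sym.
rewrite [X in _ + (_ + X)]big1 => [|x /andP[/andP[xv xu] xw]]; last first.
  by apply: big1 => y _; rewrite sp0.
rewrite (bigD1 w) // big1 => [|y /andP[yv yw]]; last first.
  by rewrite /same_pair eqxx (negbTE yw) nq.
rewrite (bigD1 u) //= big1 => [|y /andP[yv yu]]; last first.
  by rewrite /same_pair eqxx (negbTE yu) nq.
rewrite /same_pair !eqxx /= orbT. lia.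
Qed.

Let R (r : rel T) := \sum_(y | (y != u) && (y != w)) h r (sqdiff r) v y.

Lemma Ve : \sum_y h e (sqdiff e) v y = D + R e.
Proof.
rewrite (@split2 _ _ u w uw) /h (se v u) euv evw addnA; congr (_ + _).
by rewrite /D !sqE sd_tri.
Qed.

Lemma VE : \sum_y h E (sqdiff E) v y = R E.
Proof. by rewrite (@split2 _ _ u w uw) /h !Evals. Qed.


Let a := deg e v.
Let c := deg E v.
Let K := 4 * c + 4.
Let P := \sum_(y | (y != u) && (y != w)) (e v y && (a <= deg e y) : nat).
Let Q := \sum_(y | (y != u) && (y != w)) (e v y && (deg e y < a) : nat).

Lemma Rcomp : R e + K * P <= R E + K * Q.
Proof.
rewrite /P /Q !big_distrr -!big_split /=; apply: leq_sum => y /andP[yu yw].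
rewrite /h Ev //; case evy: (e v y); last by [].
have yv : y != v by apply: contraTneq evy => ->; rewrite ie.
rewrite !sqE (degE _ yv) /=.
have ac : a = c.+2 by rewrite /a /c -degEv addn2.
rewrite -/a ac /K; exact: core.
Qed.

Lemma outQ : outdegF e v = Q.+1.
Proof.
rewrite /outdegF card_sumb (@split2 _ _ u w uw) /arcF (se v u) euv evw /=.
rewrite ltnNge (ltnW du) dw /= add0n add1n; congr _.+1.
Qed.

Lemma inP : indegF e v <= P.+1.
Proof.
rewrite /indegF card_sumb (@split2 _ _ u w uw) /arcF (se w v) euv evw /=.
rewrite du ltnNge (ltnW dw) /= add0n add1n ltnS; apply: leq_sum => y _.
rewrite se /a; case: (e v y) => //=; case H: (_ < _) => //; by rewrite (ltnW H).
Qed.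

Lemma final : v \in Yset e -> cM2 e < cM2 E.
Proof.
move=> Yv; have hY : outdegF e v < indegF e v by rewrite inE in Yv.
rewrite outQ in hY.
have QP : Q.+1 <= P by have := inP; lia.
have hKP : K * Q.+1 <= K * P by rewrite leq_mul2l QP orbT.
rewrite mulnS in hKP.
have Kp : 4 <= K by rewrite /K; lia.
have RR : R e + 1 <= R E by have := Rcomp; lia.
have g1 : forall (r : rel T) x y, sqdiff r x y = sqdiff r y x by move=> r x y; rewrite !sqE sdC.
rewrite /cM2 (@decomp _ _ _ v se ie (g1 e)) (@decomp _ _ _ v sE iE (g1 E)) Ve VE Wcomp.
set W := \sum_(x | x != v) _.
have -> : 2 * (D + R e) + W = (D + R e) * 2 + W by lia.
have -> : 2 * R E + (W + 2 * D) = (R E + D) * 2 + W by lia.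
rewrite !divnMDl //; lia.
Qed.

End S.

Theorem mainTheorem4 (T : finType) (e : rel T) (u v w : T) :
  simple_graph e ->
  v \in Yset e ->
  arcF e u v -> arcF e v w ->
  ~~ e u w ->
  cM2 e < cM2 (transform e u v w).
Proof.
move=> [se ie] Yv /andP[euv du] /andP[evw dw] nuw.
have uv : u != v by apply: contraTneq euv => ->; rewrite ie.
have vw : v != w by apply: contraTneq evw => ->; rewrite ie.
have uw : u != w by apply: contraTneq du => ->; rewrite -leqNgt ltnW.
exact: (final u w se ie uv vw uw euv evw nuw du dw Yv).
Qed.
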